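(* Let $\mathcal{X}\subseteq\mathbb{R}^d$ be nonempty, closed and convex, and let $f=\frac1n\sum_{i=1}^nf_i$ with each $f_i:\mathbb{R}^d\to\mathbb{R}$ differentiable; let $x_\star\in\operatorname{arg\,min}_{x\in\mathcal{X}}f(x)$ and assume each $f_i$ has a constrained minimizer $x_{\star,i}\in\operatorname{arg\,min}_{x\in\mathcal{X}}f_i(x)$; let $D:=\max_{1\le i\le n}\|x_{\star,i}-x_\star\|$. Let $\{x_k\}\subseteq\mathcal{X}$ be generated by $x_{k+1}\in\operatorname{arg\,min}_{z\in\mathcal{X}\cap\mathcal{B}(x_k,t_k)}\langle\nabla f_{i_k}(x_k),z\rangle$ with $i_k\in\{1,\dots,n\}$. Fix $k$ and assume $\nabla f_{i_k}(x_k)\ne\nabla f_{i_k}(x_{\star,i_k})$ and $$0<t_k\le\frac{\langle\nabla f_{i_k}(x_k)-\nabla f_{i_k}(x_{\star,i_k}),x_k-x_{\star,i_k}\rangle}{\|\nabla f_{i_k}(x_k)-\nabla f_{i_k}(x_{\star,i_k})\|}.$$ Then $\|x_{k+1}-x_{\star,i_k}\|^2\le\|x_k-x_{\star,i_k}\|^2-t_k^2$, and consequently $\|x_{k+1}-x_\star\|^2\le\|x_k-x_\star\|^2-t_k^2+2Dt_k$.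
   Context: $\|\cdot\|$ is the Euclidean norm, $\mathcal{B}(x,t):=\{y:\|y-x\|\le t\}$. *)

(* Defs.v *)
From HB Require Import structures.
From mathcomp Require Import all_boot all_order all_algebra.
From mathcomp Require Import all_classical all_reals all_analysis.
Set Implicit Arguments. Unset Strict Implicit. Unset Printing Implicit Defensive.
Import Order.TTheory GRing.Theory Num.Theory.
Import numFieldNormedType.Exports.
Local Open Scope ring_scope.
Local Open Scope classical_set_scope.

(* R^d is modelled as row vectors 'rV[R]_d.  The library norm on 'rV is the
   max-norm, so the Euclidean inner product and norm are defined here. *)
Definition dotv (R : realType) (d : nat) (u v : 'rV[R]_d) : R :=
  \sum_(j < d) u ord0 j * v ord0 j.

Definition enorm (R : realType) (d : nat) (u : 'rV[R]_d) : R :=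
  Num.sqrt (dotv u u).

Definition convex_set_of (R : realType) (d : nat) (X : set 'rV[R]_d) : Prop :=
  forall x y, X x -> X y -> forall l : R, 0 <= l <= 1 ->
    X (l *: x + (1 - l) *: y).

Definition is_argmin (R : realType) (d : nat) (X : set 'rV[R]_d)
  (h : 'rV[R]_d -> R) (m : 'rV[R]_d) : Prop :=
  X m /\ forall z, X z -> h m <= h z.

Definition is_gradient (R : realType) (d : nat) (h : 'rV[R]_d -> R)
  (g : 'rV[R]_d -> 'rV[R]_d) : Prop :=
  forall x, differentiable h x /\ forall v, 'd h x v = dotv (g x) v.

Definition eball (R : realType) (d : nat) (c : 'rV[R]_d) (r : R) : set 'rV[R]_d :=
  [set y | enorm (y - c) <= r].

(* Main.v *)
Require Import Defs.
From HB Require Import structures.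
From mathcomp Require Import all_boot all_order all_algebra.
From mathcomp Require Import all_classical all_reals all_analysis.
From mathcomp Require Import ring lra.
Import Order.TTheory GRing.Theory Num.Theory.
Import numFieldNormedType.Exports.
Local Open Scope ring_scope.
Local Open Scope classical_set_scope.

Section Dot.
Context {R : realType} {d : nat}.
Implicit Types (u v w : 'rV[R]_d) (a : R).

Lemma dotvC u v : dotv u v = dotv v u.
Proof. by rewrite /dotv; apply: eq_bigr => j _; rewrite mulrC. Qed.

Lemma dotvDl u v w : dotv (u + v) w = dotv u w + dotv v w.
Proof. by rewrite /dotv -big_split; apply: eq_bigr => j _; rewrite !mxE mulrDl. Qed.

Lemma dotvZl a u v : dotv (a *: u) v = a * dotv u v.
Proof. by rewrite /dotv mulr_sumr; apply: eq_bigr => j _; rewrite !mxE mulrA. Qed.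

Lemma dotvNl u v : dotv (- u) v = - dotv u v.
Proof. by rewrite -scaleN1r dotvZl mulN1r. Qed.

Lemma dotvBl u v w : dotv (u - v) w = dotv u w - dotv v w.
Proof. by rewrite dotvDl dotvNl. Qed.

Lemma dotvDr u v w : dotv w (u + v) = dotv w u + dotv w v.
Proof. by rewrite dotvC dotvDl !(dotvC w). Qed.

Lemma dotvZr a u v : dotv v (a *: u) = a * dotv v u.
Proof. by rewrite dotvC dotvZl dotvC. Qed.

Lemma dotvNr u v : dotv v (- u) = - dotv v u.
Proof. by rewrite dotvC dotvNl dotvC. Qed.

Lemma dotvBr u v w : dotv w (u - v) = dotv w u - dotv w v.
Proof. by rewrite dotvDr dotvNr. Qed.

Lemma dotvv_ge0 u : 0 <= dotv u u.
Proof. by apply: sumr_ge0 => j _; rewrite -expr2 sqr_ge0. Qed.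

Lemma dotvv_eq0 u v : dotv u u = 0 -> dotv u v = 0.
Proof.
move=> /eqP; rewrite psumr_eq0; last by move=> j _; rewrite -expr2 sqr_ge0.
move=> /allP H; rewrite /dotv big1 // => j _.
have /H : j \in index_enum 'I_d by rewrite mem_index_enum.
by rewrite /= -expr2 sqrf_eq0 => /eqP ->; rewrite mul0r.
Qed.

Lemma enorm_sqr u : enorm u ^+ 2 = dotv u u.
Proof. by rewrite /enorm sqr_sqrtr // dotvv_ge0. Qed.

Lemma enorm_ge0 u : 0 <= enorm u.
Proof. exact: sqrtr_ge0. Qed.

Lemma cauchy_schwarz u v : dotv u v <= enorm u * enorm v.
Proof.
set A := enorm u; set B := enorm v.
have A0 : 0 <= A := enorm_ge0 u. have B0 : 0 <= B := enorm_ge0 v.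
have uu : dotv u u = A ^+ 2 by rewrite enorm_sqr.
have vv : dotv v v = B ^+ 2 by rewrite enorm_sqr.
have [Az|Ap] := eqVneq A 0.
  by rewrite dotvv_eq0 ?Az ?mul0r // uu Az expr0n.
have [Bz|Bp] := eqVneq B 0.
  by rewrite dotvC dotvv_eq0 ?Bz ?mulr0 // vv Bz expr0n.
have Apos : 0 < A by rewrite lt_def Ap.
have Bpos : 0 < B by rewrite lt_def Bp.
have := dotvv_ge0 (B *: u - A *: v).
rewrite !(dotvBl, dotvBr, dotvZl, dotvZr) uu vv (dotvC v u).
move=> H.
have : 0 <= A * B * (2 * (A * B) - 2 * dotv u v) by nra.
rewrite pmulr_rge0 ?mulr_gt0 //; lra.
Qed.

End Dot.
Lemma foc {R : realType} {d : nat} {X : set 'rV[R]_d} {h : 'rV[R]_d -> R}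
  {gp p : 'rV[R]_d} :
  is_argmin X h p -> convex_set_of X -> differentiable h p ->
  (forall v, 'd h p v = dotv gp v) ->
  forall z, X z -> 0 <= dotv gp (z - p).
Proof.
move=> [Xp hmin] cX Hd Hg z Xz.
set v := z - p.
rewrite -Hg -deriveE //.
have dh := @diff_derivable _ _ _ h p v Hd.
have c : (fun s : R => s^-1 *: ((h \o shift p) (s *: v) - h p)) @ 0^' --> 'D_v h p := dh.
have cr : (fun s : R => s^-1 *: ((h \o shift p) (s *: v) - h p)) @ 0^'+ --> 'D_v h p.
  move=> A /c /nbhs_ballP [_ /posnumP[e] xe_A].
  by exists e%:num => //= y xe_y; rewrite lt_def => /andP [xney _]; apply: xe_A.
apply: (cvgr_to_ge cr).
near=> s.
have s0 : 0 < s by near: s; exact: nbhs_right_gt.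
have s1 : s < 1 by near: s; exact: nbhs_right_lt.
rewrite /= /shift.
have -> : s *: v + p = s *: z + (1 - s) *: p.
  by rewrite /v scalerBr scalerBl scale1r addrA addrAC; congr (_ + _); rewrite addrC.
have : h p <= h (s *: z + (1 - s) *: p).
  apply: hmin; apply: cX => //; rewrite (ltW s0) (ltW s1) //.
move=> hle.
rewrite /GRing.scale /=.
apply: mulr_ge0; first by rewrite invr_ge0 ltW.
by rewrite subr_ge0.
Unshelve. all: by end_near.
Qed.

Lemma dot_expand {R : realType} {d : nat} (v w : 'rV[R]_d) (c : R) :
  dotv (v + c *: w) (v + c *: w) = dotv v v + 2 * c * dotv v w + c ^+ 2 * dotv w w.
Proof.
rewrite !(dotvDl, dotvDr, dotvZl, dotvZr) (dotvC w v); ring.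
Qed.

Lemma dotvDD {R : realType} {d : nat} (u v : 'rV[R]_d) :
  dotv (u + v) (u + v) = dotv u u + 2 * dotv v u + dotv v v.
Proof. rewrite !(dotvDl, dotvDr) (dotvC u v); ring. Qed.

Theorem theorem12 (R : realType) (d n : nat) (X : set 'rV[R]_d)
  (fs : 'I_n -> 'rV[R]_d -> R) (grad : 'I_n -> 'rV[R]_d -> 'rV[R]_d)
  (xstar : 'rV[R]_d) (xs : 'I_n -> 'rV[R]_d)
  (x : nat -> 'rV[R]_d) (t : nat -> R) (ik : nat -> 'I_n) (k : nat) :
  (0 < n)%N ->
  X !=set0 -> closed X -> convex_set_of X ->
  (forall i, is_gradient (fs i) (grad i)) ->
  is_argmin X (fun y => n%:R^-1 * \sum_(i < n) fs i y) xstar ->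
  (forall i, is_argmin X (fs i) (xs i)) ->
  let D := \big[Num.max/0]_(i < n) enorm (xs i - xstar) in
  X (x k) ->
  is_argmin (X `&` eball (x k) (t k))
    (fun z => dotv (grad (ik k) (x k)) z) (x k.+1) ->
  grad (ik k) (x k) != grad (ik k) (xs (ik k)) ->
  0 < t k ->
  t k <= dotv (grad (ik k) (x k) - grad (ik k) (xs (ik k))) (x k - xs (ik k))
         / enorm (grad (ik k) (x k) - grad (ik k) (xs (ik k))) ->
  enorm (x k.+1 - xs (ik k)) ^+ 2 <= enorm (x k - xs (ik k)) ^+ 2 - t k ^+ 2 /\
  enorm (x k.+1 - xstar) ^+ 2 <= enorm (x k - xstar) ^+ 2 - t k ^+ 2 + 2 * D * t k.
Proof.
move=> _ _ _ cX Hgrad _ Hxs D Xk [[Xy By] ymin] _ t0 tle.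
set i := ik k in ymin tle *.
set p := xs i in tle *.
set g := grad i (x k) in ymin tle *.
set gs := grad i p in tle *.
set y := x k.+1 in Xy By ymin *.
set xk := x k in Xk By ymin tle *.
set tk := t k in By t0 tle *.
set a := g - gs in tle *.
set u := xk - p in tle *.
set v := y - xk.
set w := p - y.
have FO : forall z, X z -> 0 <= dotv gs (z - p).
  by apply: (foc (Hxs i) cX (Hgrad i p).1 (Hgrad i p).2).
set Na := enorm a in tle.
have Na0 : 0 <= Na := enorm_ge0 a.
have Nap : 0 < Na.
  rewrite lt_def Na0 andbT; apply/negP => /eqP Hz.
  by move: tle; rewrite Hz invr0 mulr0 => /(lt_le_trans t0); rewrite ltxx.
have aa : dotv a a = Na ^+ 2 by rewrite enorm_sqr.
have au : tk * Na <= dotv a u by rewrite -ler_pdivlMr.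
have vv : dotv v v <= tk ^+ 2.
  have ev : enorm v <= tk := By.
  rewrite -enorm_sqr; have := enorm_ge0 v; nra.
have yp : y - p = u + v by rewrite /u /v [RHS]addrC addrA subrK.
have uvw : w = - (u + v) by rewrite /w -yp opprB.
have part1 : dotv (y - p) (y - p) <= dotv u u - tk ^+ 2.
  have case1 : forall l : R, 0 < l -> l <= 1 ->
      dotv (v + l *: w) (v + l *: w) <= tk ^+ 2 ->
      dotv (y - p) (y - p) <= dotv u u - tk ^+ 2.
    move=> l l0 l1 Hl.
    set z := l *: p + (1 - l) *: y.
    have Xp : X p := (Hxs i).1.
    have Xz : X z by apply: cX => //; rewrite (ltW l0) l1.
    have zv : z = y + l *: w by rewrite /z /w scalerBr scalerBl scale1r addrCA.
    have zB : (X `&` eball xk tk) z.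
      split=> //; rewrite /eball /=.
      have -> : z - xk = v + l *: w by rewrite zv /v addrAC.
      have := enorm_ge0 (v + l *: w); rewrite -enorm_sqr in Hl; nra.
    have gw : 0 <= dotv g w.
      have := ymin z zB; rewrite zv dotvDr dotvZr.
      move=> H; have : 0 <= l * dotv g w by lra.
      by rewrite pmulr_rge0.
    have gsw : dotv gs w <= 0.
      have := FO y Xy; rewrite -opprB -/w dotvNr; lra.
    have aw : 0 <= dotv a w by rewrite /a dotvBl; lra.
    have av : dotv a v <= - (tk * Na).
      have : dotv a w = - dotv a u - dotv a v by rewrite uvw dotvNr dotvDr; lra.
      lra.
    set c := tk / Na.
    have cNa : c * Na = tk by rewrite /c mulfVK // gt_eqF.
    have c0 : 0 <= c by rewrite /c divr_ge0 // ltW.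
    have ee := dot_expand v a c.
    have ee0 : dotv (v + c *: a) (v + c *: a) = 0.
      apply/eqP; rewrite eq_le dotvv_ge0 andbT ee aa.
      have : c ^+ 2 * Na ^+ 2 = tk ^+ 2 by rewrite -exprMn cNa.
      rewrite (dotvC v a).
      have h1 : c * dotv a v <= c * - (tk * Na) := ler_wpM2l c0 av.
      have h2 : c * (tk * Na) = tk ^+ 2 by rewrite mulrCA cNa expr2.
      rewrite mulrN h2 in h1.
      move=> h3; lra.
    have eu := @dotvv_eq0 _ _ _ u ee0.
    rewrite dotvDl dotvZl (dotvC a u) in eu.
    have uv : dotv v u <= - tk ^+ 2.
      have : c * (tk * Na) <= c * dotv u a by rewrite (dotvC u a); nra.
      rewrite mulrCA cNa; lra.
    rewrite yp dotvDD; lra.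
  have ww := dotvv_ge0 w.
  have [vw0|vw0] := ltP (dotv v w) 0.
    pose s := - dotv v w; pose W := dotv w w.
    have s0 : 0 < s by rewrite /s oppr_gt0.
    have Ws : 0 < W + s by rewrite /W; lra.
    pose l := s / (W + s).
    have lE : l * (W + s) = s by rewrite /l mulfVK // gt_eqF.
    have l0 : 0 < l by rewrite /l divr_gt0.
    have l1 : l <= 1 by rewrite /l ler_pdivrMr // mul1r /W; lra.
    apply: (case1 l) => //; rewrite dot_expand -/W.
    have : l * W = s - l * s by lra.
    rewrite /s in s0 *; nra.
  have [vvt|vvt] := ltP (dotv v v) (tk ^+ 2).
    pose r := tk ^+ 2 - dotv v v; pose W := dotv w w.
    pose K := dotv v w ^+ 2 + 1 + W.
    have r0 : 0 < r by rewrite /r subr_gt0.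
    have K0 : 0 < K by rewrite /K /W; have := sqr_ge0 (dotv v w); lra.
    pose l := r / (K + r).
    have lE : l * (K + r) = r by rewrite /l mulfVK // gt_eqF // addr_gt0.
    have l0 : 0 < l by rewrite /l divr_gt0 // addr_gt0.
    have l1 : l <= 1.
      rewrite /l ler_pdivrMr; last by rewrite addr_gt0.
      by rewrite mul1r lerDr ltW.
    apply: (case1 l) => //; rewrite dot_expand -/W.
    have h1 : 2 * dotv v w <= dotv v w ^+ 2 + 1 by have := sqr_ge0 (dotv v w - 1); lra.
    have h2 : l ^+ 2 * W <= l * W by rewrite expr2 -mulrA ler_pM2l // ?ler_piMl // /W.
    have : l * K = r - l * r by lra.
    rewrite /K /r; nra.
  have : dotv v w = - dotv v u - dotv v v by rewrite uvw dotvNr dotvDr opprD.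
  rewrite yp dotvDD; lra.
split; first by rewrite !enorm_sqr.
set q := p - xstar.
have e1 : y - xstar = (y - p) + q by rewrite /q addrA subrK.
have e2 : xk - xstar = u + q by rewrite /q /u addrA subrK.
have qD : enorm q <= D by rewrite /D /q; exact: (le_bigmax _ (fun j => enorm (xs j - xstar)) i).
have cs := cauchy_schwarz v q.
have vt : enorm v <= tk by [].
have nv0 := enorm_ge0 v. have nq0 := enorm_ge0 q.
have : enorm v * enorm q <= tk * D by apply: ler_pM.
rewrite !enorm_sqr e1 e2 (dotvDD (y - p) q) (dotvDD u q).
have E2 : dotv q (y - p) = dotv q u + dotv q v by rewrite yp dotvDr.
rewrite E2 (dotvC q v).
nra.
Qed.
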